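(* Let $\phi=\tilde p/p$ be an irreducible rational inner function on $\mathbb{D}^3$ of degree $(m,n,1)$, written with $p(z)=p_1(z_1,z_2)+z_3p_2(z_1,z_2)$ and $\tilde p(z)=z_3\tilde p_1(z_1,z_2)+\tilde p_2(z_1,z_2)$. Let $\zeta\in\mathbb{T}^3\cap\mathcal{Z}_{\tilde p}$. If the vertical line $\{(\zeta_1,\zeta_2)\}\times\mathbb{T}$ is not contained in $\mathcal{Z}_{\tilde p}$, then there is a neighborhood $U\subseteq\mathbb{C}^3$ of $\zeta$ such that \[\mathcal{Z}_{\tilde p}\cap U=\{(z_1,z_2,\psi^0(z_1,z_2)):(z_1,z_2)\in V\}\] for some open $V\subseteq\mathbb{C}^2$, where $\psi^0:=-\tilde p_2/\tilde p_1$ is analytic near $(\zeta_1,\zeta_2)$.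
   Context: $\mathbb{D}^3$, $\mathbb{T}^3$: open unit tridisk and unit 3-torus. A rational inner function (RIF) is a rational function holomorphic on $\mathbb{D}^3$ with unimodular radial limits a.e. on $\mathbb{T}^3$; it is written $\phi=\tilde p/p$ with $p$ zero-free on $\mathbb{D}^3$, $p$ and $\tilde p$ without common factors, $\dim(\mathcal{Z}_p\cap\mathbb{T}^3)\le1$. Degree $(m,n,1)$ means maximal powers $m,n,1$ in $z_1,z_2,z_3$, and $\tilde p(z)=z_1^mz_2^nz_3\overline{p(1/\bar z_1,1/\bar z_2,1/\bar z_3)}$; then $\tilde p_j(z_1,z_2)=z_1^mz_2^n\overline{p_j(1/\bar z_1,1/\bar z_2)}$ for $j=1,2$, and $p_1,p_2$ (resp. $\tilde p_1,\tilde p_2$) share no common factors. $\mathcal{Z}_q$ denotes the zero set of a polynomial $q$. *)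

(* Defs.v *)
From mathcomp Require Import all_boot all_order all_algebra.
From mathcomp Require Import reals.
From mathcomp Require Export complex.
From mathcomp Require Export mpoly.
Set Implicit Arguments. Unset Strict Implicit. Unset Printing Implicit Defensive.
Import GRing.Theory Num.Theory.
Local Open Scope ring_scope.
Local Open Scope complex_scope.

Definition pnt3 (R : realType) (a b c : R[i]) : 'I_3 -> R[i] :=
  fun i => if val i == 0%N then a else if val i == 1%N then b else c.
Definition pnt2 (R : realType) (a b : R[i]) : 'I_2 -> R[i] :=
  fun i => if val i == 0%N then a else b.

Definition degv (R : realType) (k : nat) (p : {mpoly R[i][k]}) (i : 'I_k) : nat :=
  (\max_(a <- msupp p) a i)%N.

Definition has_degree_mn1 (R : realType) (m n : nat) (p : {mpoly R[i][3]}) : Prop :=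
  [/\ degv p (@Ordinal 3 0 isT) = m, degv p (@Ordinal 3 1 isT) = n
    & degv p (@Ordinal 3 2 isT) = 1%N].

(* reflection at degree (m,n,1):
   ptilde(z) = z1^m z2^n z3 * conj (p (1/conj z1, 1/conj z2, 1/conj z3)) *)
Definition refl_mn1 (R : realType) (m n : nat) (p : {mpoly R[i][3]}) : {mpoly R[i][3]} :=
  \sum_(a <- msupp p)
     ((p@_a)^* *: 'X_[[multinom (nth 0%N [:: m; n; 1%N] i - a i)%N | i < 3]]).

Definition mdivides (R : realType) (d p : {mpoly R[i][3]}) : Prop :=
  exists q, p = d * q.
Definition nonconstant (R : realType) (d : {mpoly R[i][3]}) : bool := (1 < msize d)%N.
Definition irreducible_mpoly (R : realType) (p : {mpoly R[i][3]}) : Prop :=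
  nonconstant p /\
  forall a b : {mpoly R[i][3]}, p = a * b -> ~~ nonconstant a \/ ~~ nonconstant b.
Definition no_common_factor (R : realType) (p q : {mpoly R[i][3]}) : Prop :=
  forall d, mdivides d p -> mdivides d q -> ~~ nonconstant d.

Definition zero_free_D3 (R : realType) (p : {mpoly R[i][3]}) : Prop :=
  forall a b c : R[i], `|a| < 1 -> `|b| < 1 -> `|c| < 1 -> p.@[pnt3 a b c] != 0.

(* phi = ptilde/p is an irreducible rational inner function of degree (m,n,1),
   written in lowest terms *)
Definition irreducible_RIF_mn1 (R : realType) (m n : nat) (p : {mpoly R[i][3]}) : Prop :=
  [/\ has_degree_mn1 m n p, zero_free_D3 p,
      no_common_factor p (refl_mn1 m n p) & irreducible_mpoly p].

Definition open3 (R : realType) (U : R[i] -> R[i] -> R[i] -> Prop) : Prop :=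
  forall a b c, U a b c -> exists r : R, 0 < r /\
    forall x y w : R[i], `|x - a| < r%:C -> `|y - b| < r%:C -> `|w - c| < r%:C -> U x y w.
Definition open2 (R : realType) (V : R[i] -> R[i] -> Prop) : Prop :=
  forall a b, V a b -> exists r : R, 0 < r /\
    forall x y : R[i], `|x - a| < r%:C -> `|y - b| < r%:C -> V x y.

(* Main.v *)
Require Import Defs.
From mathcomp Require Import all_boot all_order all_algebra.
From mathcomp Require Import reals complex mpoly.
From mathcomp Require Import ring lra.
Set Implicit Arguments. Unset Strict Implicit.
Import Order.TTheory GRing.Theory Num.Theory.
Local Open Scope ring_scope.
Local Open Scope complex_scope.

Section LLs.
Variable R : realType.
Variable k : nat.
Local Notation C := R[i].
Variable x : 'I_k -> C.

Lemma cD (a b : R) : (a + b)%:C = a%:C + b%:C :> R[i].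
Proof. exact: (rmorphD (real_complex R)). Qed.
Lemma cM (a b : R) : (a * b)%:C = a%:C * b%:C :> R[i].
Proof. exact: (rmorphM (real_complex R)). Qed.

Lemma normC_re (z : C) : `|z| = (complex.Re `|z|)%:C.
Proof.
have h := ger0_Im (normr_ge0 z).
by rewrite [LHS]complexE h mulr0 addr0.
Qed.

Lemma Re_norm_ge0 (z : C) : 0 <= complex.Re `|z|.
Proof. by rewrite -ler0c -normC_re. Qed.

Definition LL (f : ('I_k -> C) -> C) := exists K : R, 0 <= K /\
  forall (y : 'I_k -> C) (d : R), 0 <= d -> d <= 1 ->
    (forall i, `|y i - x i| <= d%:C) -> `|f y - f x| <= (K * d)%:C.

Lemma LL_const c : LL (fun _ => c).
Proof. exists 0; split => // y d _ _ _; by rewrite subrr normr0 mul0r. Qed.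

Lemma LL_proj i : LL (fun y => y i).
Proof. exists 1; split => // y d _ _ H; by rewrite mul1r. Qed.

Lemma LL_add f g : LL f -> LL g -> LL (fun y => f y + g y).
Proof.
move=> [K1 [K10 H1]] [K2 [K20 H2]]; exists (K1 + K2); split; first lra.
move=> y d d0 d1 Hy.
rewrite (_ : f y + g y - (f x + g x) = (f y - f x) + (g y - g x)); last by ring.
apply: le_trans (ler_normD _ _) _.
have -> : ((K1+K2)*d)%:C = (K1*d)%:C + (K2*d)%:C :> C by rewrite mulrDl; exact: cD.
apply: lerD; [exact: H1| exact: H2].
Qed.

Lemma LL_mul f g : LL f -> LL g -> LL (fun y => f y * g y).
Proof.
move=> [K1 [K10 H1]] [K2 [K20 H2]].
set a := complex.Re `|f x|; set b := complex.Re `|g x|.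
have a0 : 0 <= a := Re_norm_ge0 (f x). have b0 : 0 <= b := Re_norm_ge0 (g x).
exists ((a + K1) * K2 + K1 * b); split; first nra.
move=> y d d0 d1 Hy.
rewrite (_ : f y * g y - f x * g x = f y * (g y - g x) + (f y - f x) * g x); last by ring.
apply: le_trans (ler_normD _ _) _.
have -> : (((a + K1) * K2 + K1 * b) * d)%:C = (a + K1)%:C * (K2 * d)%:C + (K1 * d)%:C * b%:C :> C.
  rewrite (_ : ((a + K1) * K2 + K1 * b) * d = (a + K1) * (K2 * d) + (K1 * d) * b); last by ring.
  by rewrite cD !cM.
rewrite !normrM.
have hf : `|f y| <= (a + K1)%:C.
  rewrite (_ : f y = f x + (f y - f x)); last by ring.
  apply: le_trans (ler_normD _ _) _.
  rewrite cD [`|f x|]normC_re -/a lerD2l.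
  apply: le_trans (H1 _ _ d0 d1 Hy) _; rewrite lecR; nra.
apply: lerD.
  apply: ler_pM => //; exact: H2.
rewrite [`|g x|]normC_re -/b; apply: ler_pM => //; first by rewrite ler0c.
exact: H1.
Qed.

Lemma LL_ext f g : LL f -> (forall y, f y = g y) -> LL g.
Proof. move=> [K [K0 H]] e; exists K; split => // y d d0 d1 Hy; rewrite -!e; exact: H. Qed.

Lemma LL_exp f n : LL f -> LL (fun y => f y ^+ n).
Proof.
move=> Hf; elim: n => [|n IH].
  by apply: (LL_ext (LL_const 1)) => y; rewrite expr0.
by apply: (LL_ext (LL_mul Hf IH)) => y; rewrite exprS.
Qed.

Lemma LL_sum (I : Type) (s : seq I) (F : I -> ('I_k -> C) -> C) :
  (forall j, LL (F j)) -> LL (fun y => \sum_(j <- s) F j y).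
Proof.
move=> HF; elim: s => [|j s IH].
  by apply: (LL_ext (LL_const 0)) => y; rewrite big_nil.
by apply: (LL_ext (LL_add (HF j) IH)) => y; rewrite big_cons.
Qed.

Lemma LL_prod (I : Type) (s : seq I) (F : I -> ('I_k -> C) -> C) :
  (forall j, LL (F j)) -> LL (fun y => \prod_(j <- s) F j y).
Proof.
move=> HF; elim: s => [|j s IH].
  by apply: (LL_ext (LL_const 1)) => y; rewrite big_nil.
by apply: (LL_ext (LL_mul (HF j) IH)) => y; rewrite big_cons.
Qed.

Lemma LL_meval (q : {mpoly C[k]}) : LL (fun y => q.@[y]).
Proof.
apply: (LL_ext (f := fun y => \sum_(m <- msupp q) q@_m * \prod_i y i ^+ m i)); last first.
  by move=> y; rewrite mevalE.
apply: LL_sum => m; apply: LL_mul; first exact: LL_const.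
apply: LL_prod => i; apply: LL_exp; exact: LL_proj.
Qed.

Lemma nonvanish_open (q : {mpoly C[k]}) : q.@[x] != 0 ->
  exists r : R, 0 < r /\ forall y, (forall i, `|y i - x i| < r%:C) -> q.@[y] != 0.
Proof.
move=> qx0; have [K [K0 HK]] := LL_meval q.
set a := complex.Re `|q.@[x]|.
have a0 : 0 < a by rewrite -ltcR -normC_re normr_gt0.
set b := Num.min 1 (a / (K + 1)).
have b0 : 0 < b by rewrite lt_min ltr01 /= divr_gt0 //; lra.
have b1 : b <= 1 by rewrite ge_min lexx.
have bK : b * (K + 1) <= a.
  have : b <= a / (K + 1) by rewrite ge_min lexx orbT.
  by rewrite ler_pdivlMr //; lra.
exists (b / 2); split; first lra.
move=> y Hy; apply/negP => /eqP qy0.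
have := HK y (b / 2) ltac:(lra) ltac:(lra) (fun i => ltW (Hy i)).
rewrite qy0 sub0r normrN [`|_|]normC_re -/a lecR; nra.
Qed.

End LLs.
Theorem lemma3p1 (R : realType) (m n : nat) (p : {mpoly R[i][3]})
  (p1 p2 pt1 pt2 : {mpoly R[i][2]}) (zeta1 zeta2 zeta3 : R[i]) :
  irreducible_RIF_mn1 m n p ->
  (forall a b c : R[i], p.@[pnt3 a b c] = p1.@[pnt2 a b] + c * p2.@[pnt2 a b]) ->
  (forall a b c : R[i],
     (refl_mn1 m n p).@[pnt3 a b c] = c * pt1.@[pnt2 a b] + pt2.@[pnt2 a b]) ->
  `|zeta1| = 1 -> `|zeta2| = 1 -> `|zeta3| = 1 ->
  (refl_mn1 m n p).@[pnt3 zeta1 zeta2 zeta3] = 0 ->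
  ~ (forall t : R[i], `|t| = 1 -> (refl_mn1 m n p).@[pnt3 zeta1 zeta2 t] = 0) ->
  exists (U : R[i] -> R[i] -> R[i] -> Prop) (V : R[i] -> R[i] -> Prop),
    [/\ open3 U, U zeta1 zeta2 zeta3, open2 V,
        (forall a b, V a b -> pt1.@[pnt2 a b] != 0) &
        forall a b c : R[i],
          ((refl_mn1 m n p).@[pnt3 a b c] = 0 /\ U a b c) <->
          (V a b /\ c = - pt2.@[pnt2 a b] / pt1.@[pnt2 a b])].
Proof.
move=> _ _ Hrefl _ _ _ Hz Hline.
have pt1ne : pt1.@[pnt2 zeta1 zeta2] != 0.
  apply/negP => /eqP e; apply: Hline => t _.
  rewrite Hrefl e mulr0 add0r in Hz.
  by rewrite Hrefl e Hz mulr0 addr0.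
exists (fun a b (_ : R[i]) => pt1.@[pnt2 a b] != 0), (fun a b => pt1.@[pnt2 a b] != 0).
split => //.
- move=> a b c Va; have [r [r0 Hr]] := nonvanish_open Va.
  exists r; split => // x' y' w hx hy _; apply: Hr => i.
  by rewrite /pnt2; case: ifP.
- move=> a b Va; have [r [r0 Hr]] := nonvanish_open Va.
  exists r; split => // x' y' hx hy; apply: Hr => i.
  by rewrite /pnt2; case: ifP.
- move=> a b c; rewrite Hrefl; split.
    move=> [e Va]; split => //.
    rewrite -[c](mulfK Va); congr (_ / _); apply/eqP; rewrite -addr_eq0; exact/eqP.
  by move=> [Va ->]; split => //; rewrite mulfVK // addNr.
Qed.
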